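(* Let $\lambda_1,\lambda_2$ be as in the context and $K\in(-1,1)$. Consider the initial value problem $$b'(v)=\sqrt{\lambda_1^2-K\left(\lambda_1^2\cos^2 b(v)+\lambda_2^2\sin^2 b(v)\right)},\qquad b(0)=0.$$ Its solution $b$ is well-defined on all of $\mathbb{R}$ and satisfies: (1) $b$ is an increasing diffeomorphism from $\mathbb{R}$ to $\mathbb{R}$; (2) $b$ is odd; (3) there exists a real number $W>0$ such that $b(v+W)=b(v)+\pi$ for all $v\in\mathbb{R}$; (4) $b(kW)=k\pi$ for all $k\in\mathbb{Z}$; (5) $b(kW/2)=k\pi/2$ for all odd integers $k$.
   Context: Either $\lambda_1>\lambda_2>0$ or $\lambda_1=\lambda_2=1$. *)

(* Defs.v *)
From Stdlib Require Import Reals ZArith.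
From Coquelicot Require Import Coquelicot.
Open Scope R_scope.

Definition admissible_lambdas (l1 l2 : R) : Prop :=
  (l1 > l2 /\ l2 > 0) \/ (l1 = 1 /\ l2 = 1).

Definition ode_rhs (l1 l2 K x : R) : R :=
  sqrt (l1 ^ 2 - K * (l1 ^ 2 * (cos x) ^ 2 + l2 ^ 2 * (sin x) ^ 2)).

Definition solves_ivp (l1 l2 K : R) (b : R -> R) : Prop :=
  b 0 = 0 /\ forall v : R, is_derive b v (ode_rhs l1 l2 K (b v)).

Definition increasing_diffeo (b : R -> R) : Prop :=
  (forall x y : R, x < y -> b x < b y) /\
  (forall x : R, ex_derive b x /\ continuous (Derive b) x) /\
  exists g : R -> R,
    (forall x : R, g (b x) = x) /\ (forall y : R, b (g y) = y) /\
    (forall y : R, ex_derive g y /\ continuous (Derive g) y).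

(* Main.v *)
Require Import Defs.
From Stdlib Require Import Reals ZArith Lra Psatz Ranalysis5.
From Coquelicot Require Import Coquelicot.
Open Scope R_scope.

Ltac rring := match goal with |- ?a = ?b => change (@eq R a b) end; ring.
Ltac rfield := match goal with |- ?a = ?b => change (@eq R a b) end; field.

Lemma der_eq (F : R -> R) x l l' : is_derive F x l -> l = l' -> is_derive F x l'.
Proof. intros H E; subst; exact H. Qed.

Lemma const0 (F : R -> R) : (forall x, is_derive F x 0) -> forall x y, F x = F y.
Proof.
  intros HF x y.
  destruct (MVT_gen F x y (fun _ => 0)) as [c [_ Hc]].
  - intros; apply HF.
  - intros; apply continuity_pt_filterlim, (ex_derive_continuous F); eexists; apply HF.
  - lra.
Qed.

Section Abs.
Variable f : R -> R.
Hypothesis fpos : forall x, 0 < f x.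
Hypothesis fcont : forall x, continuous f x.
Variable Mf : R.
Hypothesis fub : forall x, f x <= Mf.
Hypothesis fper : forall x, f (x + PI) = f x.
Hypothesis feven : forall x, f (- x) = f x.
Hypothesis fsym : forall x, f (PI - x) = f x.

Definition h x := / f x.
Definition G x := RInt h 0 x.

Lemma fne x : f x <> 0.
Proof. generalize (fpos x); lra. Qed.

Lemma hcont x : continuous h x.
Proof. apply continuous_Rinv_comp; [apply fcont | apply fne]. Qed.

Lemma G_der x : is_derive G x (h x).
Proof.
  apply (is_derive_RInt h G 0 x).
  - apply filter_forall; intros y. unfold G. apply (RInt_correct (V := R_CompleteNormedModule)), (ex_RInt_continuous (V := R_CompleteNormedModule)); intros; apply hcont.
  - apply hcont.
Qed.

Lemma G_cont x : continuity_pt G x.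
Proof. apply continuity_pt_filterlim, (ex_derive_continuous G); eexists; apply G_der. Qed.

Lemma Mfpos : 0 < Mf.
Proof. generalize (fpos 0) (fub 0); lra. Qed.

Lemma G_lin x y : x <= y -> (y - x) / Mf <= G y - G x.
Proof.
  intros Hxy.
  destruct (MVT_gen G x y h) as [c [_ Hc]].
  - intros; apply G_der.
  - intros; apply G_cont.
  - rewrite Hc. unfold Rdiv. rewrite Rmult_comm.
    apply Rmult_le_compat_r; [lra|].
    unfold h. apply Rinv_le_contravar; [apply fpos | apply fub].
Qed.

Lemma G_lt x y : x < y -> G x < G y.
Proof.
  intros H. generalize (G_lin x y (Rlt_le _ _ H)). intros H2.
  assert (0 < (y - x) / Mf) by (apply Rdiv_lt_0_compat; [lra | apply Mfpos]). lra.
Qed.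

Lemma G_le_inv x y : G x <= G y -> x <= y.
Proof.
  intros H. destruct (Rle_or_lt x y) as [|H2]; auto.
  generalize (G_lt _ _ H2); lra.
Qed.

Lemma G_inj x y : G x = G y -> x = y.
Proof. intros H. apply Rle_antisym; apply G_le_inv; lra. Qed.

Lemma G0 : G 0 = 0.
Proof. unfold G. rewrite RInt_point. reflexivity. Qed.

Lemma G_surj y : {x | G x = y}.
Proof.
  set (a := - (Mf * Rabs y)). set (b := Mf * Rabs y).
  assert (Ha : G a <= y).
  { assert (0 <= b) by (apply Rmult_le_pos; [generalize Mfpos; lra | apply Rabs_pos]).
    generalize (G_lin a 0 ltac:(unfold a; fold b; lra)). rewrite G0.
    replace ((0 - a) / Mf) with (Rabs y) by (unfold a; field; generalize Mfpos; lra).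
    generalize (Rle_abs (- y)); rewrite Rabs_Ropp; lra. }
  assert (Hb : y <= G b).
  { assert (0 <= b) by (apply Rmult_le_pos; [generalize Mfpos; lra | apply Rabs_pos]).
    generalize (G_lin 0 b H). rewrite G0.
    replace ((b - 0) / Mf) with (Rabs y) by (unfold b; field; generalize Mfpos; lra).
    generalize (Rle_abs y); lra. }
  destruct (IVT_gen G a b y G_cont) as [x [_ Hx]].
  - split; [apply Rle_trans with (G a); [apply Rmin_l | lra]
          | apply Rle_trans with (G b); [lra | apply Rmax_r]].
  - exists x; exact Hx.
Defined.

Definition binv y := proj1_sig (G_surj y).
Lemma Gbinv y : G (binv y) = y.
Proof. exact (proj2_sig (G_surj y)). Qed.

Lemma binv_le x y : x <= y -> binv x <= binv y.
Proof. intros; apply G_le_inv; rewrite !Gbinv; lra. Qed.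

Lemma binv_der y : is_derive binv y (f (binv y)).
Proof.
  apply is_derive_Reals.
  assert (E : forall pr, derive_pt G (binv y) pr = h (binv y))
    by (intros; apply derive_pt_eq_0, is_derive_Reals, G_der).
  assert (Hincr : binv (y-1) <= binv y <= binv (y+1))
    by (split; apply binv_le; lra).
  set (Prf := fun a (_ : binv (y-1) <= a <= binv (y+1)) =>
          exist (fun l => derivable_pt_lim G a l) (h a)
            (proj1 (is_derive_Reals _ _ _) (G_der a)) : derivable_pt G a).
  assert (Prg : continuity_pt binv y).
  { apply (continuity_pt_recip_interv G binv (binv y - 1) (binv y + 1)).
    - lra.
    - intros; apply G_lt; lra.
    - intros; unfold comp, id; apply Gbinv.
    - intros x H1 H2. split; apply G_le_inv; rewrite Gbinv; lra.
    - intros; apply G_cont.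
    - split.
      + rewrite <- (Gbinv y) at 2. apply G_lt; lra.
      + rewrite <- (Gbinv y) at 1. apply G_lt; lra. }
  assert (Hne : derive_pt G (binv y) (Prf (binv y) Hincr) <> 0).
  { rewrite E. unfold h. apply Rinv_neq_0_compat, fne. }
  assert (D := derivable_pt_lim_recip_interv G binv (y-1) (y+1) y Prf Prg
                 ltac:(lra) ltac:(lra) Hincr
                 ltac:(intros; unfold comp, id; apply Gbinv) Hne).
  rewrite E in D. unfold h in D.
  replace (f (binv y)) with (1 / / f (binv y)); [exact D|].
  field. apply fne.
Qed.

Definition W := G PI.

Lemma dneg x : is_derive (fun x => - x) x (-1).
Proof. auto_derive; auto; ring. Qed.
Lemma dplus x : is_derive (fun x => x + PI) x 1.
Proof. auto_derive; auto; ring. Qed.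
Lemma dpim x : is_derive (fun x => PI - x) x (-1).
Proof. auto_derive; auto; ring. Qed.

Lemma G_odd x : G (- x) = - G x.
Proof.
  assert (H := const0 (fun x => G (- x) + G x)).
  assert (H0 : G (- 0) + G 0 = 0) by (rewrite Ropp_0, G0; ring).
  enough (G (- x) + G x = 0) by lra.
  rewrite <- H0. apply H. intros t.
  eapply der_eq.
  - apply (is_derive_plus (fun x => G (- x)) G); [apply (is_derive_comp G (fun x => - x)); [apply G_der | apply dneg] | apply G_der].
  - unfold plus, scal; simpl; unfold mult; simpl. unfold h; rewrite feven; ring.
Qed.

Lemma G_per x : G (x + PI) = G x + W.
Proof.
  assert (H := const0 (fun x => G (x + PI) - G x)).
  assert (H0 : G (0 + PI) - G 0 = W) by (rewrite Rplus_0_l, G0; unfold W; ring).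
  enough (G (x + PI) - G x = W) by lra.
  rewrite <- H0. apply H. intros t.
  eapply der_eq.
  - apply (is_derive_minus (fun x => G (x + PI)) G); [apply (is_derive_comp G (fun x => x + PI)); [apply G_der | apply dplus] | apply G_der].
  - unfold minus, plus, opp, scal; simpl; unfold mult; simpl. unfold h; rewrite fper; ring.
Qed.

Lemma G_sym x : G (PI - x) = W - G x.
Proof.
  assert (H := const0 (fun x => G (PI - x) + G x)).
  assert (H0 : G (PI - 0) + G 0 = W) by (rewrite Rminus_0_r, G0; unfold W; ring).
  enough (G (PI - x) + G x = W) by lra.
  rewrite <- H0. apply H. intros t.
  eapply der_eq.
  - apply (is_derive_plus (fun x => G (PI - x)) G); [apply (is_derive_comp G (fun x => PI - x)); [apply G_der | apply dpim] | apply G_der].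
  - unfold plus, scal; simpl; unfold mult; simpl. unfold h; rewrite fsym; ring.
Qed.

Lemma G_Z (k : Z) x : G (x + IZR k * PI) = G x + IZR k * W.
Proof.
  induction k using Z.peano_ind.
  - simpl. rewrite !Rmult_0_l, !Rplus_0_r. reflexivity.
  - rewrite succ_IZR. replace (x + (IZR k + 1) * PI) with ((x + IZR k * PI) + PI) by ring.
    rewrite G_per, IHk. match goal with |- ?a = ?b => change (@eq R a b) end. ring.
  - unfold Z.pred. rewrite plus_IZR. simpl IZR.
    generalize (G_per (x + (IZR k + -1) * PI)).
    replace (x + (IZR k + -1) * PI + PI) with (x + IZR k * PI) by ring.
    rewrite IHk. intros; lra.
Qed.

Lemma main_abs :
  (exists b : R -> R, b 0 = 0 /\ forall v, is_derive b v (f (b v))) /\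
  (forall b : R -> R, b 0 = 0 -> (forall v, is_derive b v (f (b v))) ->
     increasing_diffeo b /\
     (forall v : R, b (- v) = - b v) /\
     exists W : R, W > 0 /\
       (forall v : R, b (v + W) = b v + PI) /\
       (forall k : Z, b (IZR k * W) = IZR k * PI) /\
       (forall k : Z, Z.odd k = true -> b (IZR k * W / 2) = IZR k * PI / 2)).
Proof.
  split.
  { exists binv. split.
    - apply G_inj. rewrite Gbinv, G0. reflexivity.
    - apply binv_der. }
  intros b Hb0 Hb.
  assert (HGb : forall v, G (b v) = v).
  { intros v.
    assert (H := const0 (fun v => G (b v) - v)).
    enough (G (b v) - v = 0) by lra.
    transitivity (G (b 0) - 0); [|rewrite Hb0, G0; ring].
    apply H. intros t. eapply der_eq.
    - apply (is_derive_minus (fun v => G (b v)) (fun v => v)); [apply (is_derive_comp G b); [apply G_der | apply Hb] | apply is_derive_id].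
    - unfold minus, plus, opp, scal, one; simpl; unfold mult; simpl. unfold h. field. apply fne. }
  assert (Hbinj : forall x y, b x = b y -> x = y).
  { intros x y E. rewrite <- (HGb x), <- (HGb y), E. reflexivity. }
  assert (HbG : forall y, b (G y) = y).
  { intros y. apply G_inj. rewrite HGb. reflexivity. }
  split; [|split].
  - split; [|split].
    + intros x y Hxy. destruct (Rlt_or_le (b x) (b y)) as [|H]; auto.
      assert (H2 : G (b y) <= G (b x)).
      { destruct H as [H|H]; [left; apply G_lt; exact H | rewrite H; right; reflexivity]. }
      rewrite !HGb in H2. lra.
    + intros x. split; [eexists; apply Hb|].
      apply (continuous_ext (fun x => f (b x))).
      * intros t; symmetry; apply is_derive_unique, Hb.
      * apply continuous_comp; [apply (ex_derive_continuous b); eexists; apply Hb | apply fcont].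
    + exists G. split; [exact HGb | split; [exact HbG|]].
      intros y. split; [eexists; apply G_der|].
      apply (continuous_ext h).
      * intros t; symmetry; apply is_derive_unique, G_der.
      * apply hcont.
  - intros v. apply G_inj. rewrite G_odd, !HGb. reflexivity.
  - exists W. split; [|split; [|split]].
    + unfold W. rewrite <- G0. apply G_lt, PI_RGT_0.
    + intros v. apply G_inj. rewrite G_per, !HGb. reflexivity.
    + intros k. apply G_inj. rewrite HGb.
      generalize (G_Z k 0). rewrite Rplus_0_l, G0. intros ->. rring.
    + intros k Hk. apply Z.odd_spec in Hk. destruct Hk as [j ->].
      apply G_inj. rewrite HGb.
      rewrite plus_IZR, mult_IZR.
      replace ((IZR 2 * IZR j + IZR 1) * PI / 2) with (PI / 2 + IZR j * PI) by (simpl; field).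
      rewrite G_Z.
      assert (E : G (PI / 2) = W / 2).
      { generalize (G_sym (PI / 2)). replace (PI - PI / 2) with (PI / 2) by field. lra. }
      rewrite E. simpl. rfield.
Qed.

End Abs.

Theorem proposition4p1 (l1 l2 K : R)
  (Hl : admissible_lambdas l1 l2) (HK : -1 < K < 1) :
  (exists b : R -> R, solves_ivp l1 l2 K b) /\
  (forall b : R -> R, solves_ivp l1 l2 K b ->
     increasing_diffeo b /\
     (forall v : R, b (- v) = - b v) /\
     exists W : R, W > 0 /\
       (forall v : R, b (v + W) = b v + PI) /\
       (forall k : Z, b (IZR k * W) = IZR k * PI) /\
       (forall k : Z, Z.odd k = true -> b (IZR k * W / 2) = IZR k * PI / 2)).
Proof.
  set (P x := l1 ^ 2 - K * (l1 ^ 2 * (cos x) ^ 2 + l2 ^ 2 * (sin x) ^ 2)).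
  assert (Hl12 : 0 < l1 ^ 2 /\ l2 ^ 2 <= l1 ^ 2).
  { destruct Hl as [[H1 H2] | [H1 H2]]; subst; split; nra. }
  assert (HQ : forall x, 0 <= l1 ^ 2 * (cos x) ^ 2 + l2 ^ 2 * (sin x) ^ 2 <= l1 ^ 2).
  { intros x. generalize (sin2_cos2 x). unfold Rsqr. intros E.
    split; nra. }
  assert (HPpos : forall x, 0 < P x).
  { intros x. unfold P. generalize (HQ x). intros.
    destruct (Rle_or_lt 0 K); nra. }
  assert (HPub : forall x, P x <= 2 * l1 ^ 2).
  { intros x. unfold P. generalize (HQ x). intros. nra. }
  destruct (main_abs (ode_rhs l1 l2 K)) with (Mf := sqrt (2 * l1 ^ 2)) as [E U].
  - intros x. apply sqrt_lt_R0, HPpos.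
  - intros x. apply (ex_derive_continuous (ode_rhs l1 l2 K)).
    generalize (HPpos x); unfold P, ode_rhs; intros HPx. auto_derive. tauto.
  - intros x. apply sqrt_le_1_alt, HPub.
  - intros x. unfold ode_rhs. rewrite neg_cos, neg_sin. f_equal. ring.
  - intros x. unfold ode_rhs. rewrite cos_neg, sin_neg. f_equal. ring.
  - intros x. unfold ode_rhs. rewrite sin_PI_x, cos_minus, cos_PI, sin_PI. f_equal. ring.
  - split.
    + destruct E as [b Hb]. exists b. exact Hb.
    + intros b [Hb0 Hb]. apply U; assumption.
Qed.
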